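(* Let $b \geq 2$, $s \geq 1$ and $m \geq 1$ be integers, and let $\mathcal{P} = \{\boldsymbol{x}_0,\dots,\boldsymbol{x}_{b^m-1}\}$ be a family of $b^m$ points in $[0,1)^s$. Then $\mathcal{P}$ is $s$-admissible in base $b$ if and only if $\mathcal{P}$ is a $(0,m,s)$-net in base $b$. Moreover, $\mathcal{P}$ is not $d$-admissible in base $b$ for any integer $d < s$.
   Context: A $(0,m,s)$-net in base $b$ is a family of $b^m$ points in $[0,1)^s$ such that every interval $\prod_{i=1}^s [a_i b^{-d_i},(a_i+1)b^{-d_i})$ with $d_i \in \mathbb{N}_0$, $a_i \in \{0,\dots,b^{d_i}-1\}$ and volume $b^{-m}$ contains exactly one point of the family. Each $x \in [0,1)$ is written in its $b$-adic expansion $x = \sum_{i\geq 1} x_i b^{-i}$, $x_i \in \{0,\dots,b-1\}$ (not ending in infinitely many digits $b-1$). For $x, y \in [0,1)$, $x \ominus y = \sum_{i \geq 1} z_i b^{-i}$ with $z_i \equiv x_i - y_i \pmod b$, $z_i \in\{0,\dots,b-1\}$. For $z = \sum_{i\geq1} z_i b^{-i}$ with $z_1=\dots=z_k=0$ and $z_{k+1}\neq 0$, set $\|z\|_b = b^{-(k+1)}$, and $\|z\|_b = 0$ if all digits vanish. For points $\boldsymbol{x}=(x^{(1)},\dots,x^{(s)})$, $\boldsymbol{y}$, let $\boldsymbol{x}\ominus\boldsymbol{y} = (x^{(1)}\ominus y^{(1)},\dots,x^{(s)}\ominus y^{(s)})$ and $\|\boldsymbol{z}\|_b = \prod_{j=1}^s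 \|z^{(j)}\|_b$. For an integer $d$, the family $\mathcal{P}$ is $d$-admissible in base $b$ if $\min_{0 \leq k < n < b^m} \|\boldsymbol{x}_n \ominus \boldsymbol{x}_k\|_b > b^{-(m+d)}$. *)

(* Defs.v *)
From HB Require Import structures.
From mathcomp Require Import all_boot all_order all_algebra.
From mathcomp Require Import reals.
From Stdlib Require Import ClassicalEpsilon.
Set Implicit Arguments. Unset Strict Implicit. Unset Printing Implicit Defensive.
Import Order.TTheory GRing.Theory Num.Theory.
Local Open Scope ring_scope.

Section Defs.
Variable R : realType.

(* i-th b-adic digit (i >= 1) of x in [0,1): x_i = floor(x b^i) mod b.
   This is the expansion not ending in infinitely many digits b-1. *)
Definition bdigit (b : nat) (x : R) (i : nat) : int :=
  (Num.floor (x * (b%:R) ^+ i) %% (b%:Z))%Z.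

Definition bsub_digit (b : nat) (x y : R) (i : nat) : int :=
  ((bdigit b x i - bdigit b y i) %% (b%:Z))%Z.

Definition bnorm_digits (b : nat) (z : nat -> int) : R :=
  match excluded_middle_informative (exists i, (0 < i)%N && (z i != 0)) with
  | left ex => ((b%:R) ^+ (ex_minn ex))^-1
  | right _ => 0
  end.

Definition bnorm_sub (b : nat) (x y : R) : R := bnorm_digits b (bsub_digit b x y).

Definition bnorm_sub_pt (b s : nat) (x y : 'I_s -> R) : R :=
  \prod_(j < s) bnorm_sub b (x j) (y j).

(* d-admissibility: min_{0 <= k < n < b^m} ||x_n (-) x_k||_b > b^{-(m+d)}
   (the min is over a nonempty finite set when b^m >= 2, so this is the
   statement that every such pair exceeds the bound). *)
Definition admissible (b m s : nat) (P : 'I_(b ^ m) -> 'I_s -> R) (d : int) : Prop :=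
  forall k n : 'I_(b ^ m), (k < n)%N ->
    bnorm_sub_pt b (P n) (P k) > (b%:R) ^ (- (m%:Z + d)).

Definition in_elem_box (b s : nat) (dd aa : 'I_s -> nat) (x : 'I_s -> R) : bool :=
  [forall j, ((aa j)%:R / (b%:R) ^+ (dd j) <= x j) &&
             (x j < (aa j).+1%:R / (b%:R) ^+ (dd j))].

(* (0,m,s)-net in base b: every elementary interval of volume b^{-m}
   (i.e. sum_j d_j = m) contains exactly one point of the family. *)
Definition is_net0 (b m s : nat) (P : 'I_(b ^ m) -> 'I_s -> R) : Prop :=
  forall dd aa : 'I_s -> nat,
    (\sum_(j < s) dd j)%N = m ->
    (forall j, (aa j < b ^ dd j)%N) ->
    #|[set n : 'I_(b ^ m) | in_elem_box b dd aa (P n)]| = 1%N.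

End Defs.

Arguments admissible {R} b m s P d.
Arguments is_net0 {R} b m s P.

(* Main.v *)
Require Import Defs.
From HB Require Import structures.
From mathcomp Require Import all_boot all_order all_algebra.
From mathcomp Require Import reals.
From mathcomp Require Import zify ring lra.
From Stdlib Require Import ClassicalEpsilon.
Import Order.TTheory GRing.Theory Num.Theory.
Local Open Scope ring_scope.

Lemma sub_sum s (e : 'I_s -> nat) m : (m <= \sum_j e j)%N ->
  exists dd : 'I_s -> nat, (forall j, dd j <= e j)%N /\ (\sum_j dd j)%N = m.
Proof.
elim: m => [|m IH] h.
  by exists (fun _ => 0%N); split => // ; rewrite big1.
have [dd [hle hs]] := IH (ltnW h).
have [j hj] : exists j, (dd j < e j)%N.
  apply: NNPP => hn.
  have : (\sum_j e j <= \sum_j dd j)%N.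
    apply: leq_sum => j _; rewrite leqNgt; apply/negP => hj; apply: hn; by exists j.
  lia.
exists (fun i => dd i + (i == j))%N; split.
  by move=> i; case: eqP => [->|_]; [rewrite addn1 | rewrite addn0 hle].
rewrite big_split /= hs (bigD1 j) //= eqxx big1 ?addn0 ?addn1 // => i /negbTE ->.
by [].
Qed.

Section Aux.
Variable R : realType.
Variable b : nat.
Hypothesis hb : (2 <= b)%N.

Let B : R := b%:R.
Let B_gt0 : 0 < B. Proof. rewrite /B ltr0n; lia. Qed.

Definition Xf (x : R) (i : nat) : int := Num.floor (x * B ^+ i).

Lemma intr_b : ((b%:Z)%:~R : R) = B.
Proof. by rewrite /B pmulrn. Qed.

Lemma Xf_div x i : ((Xf x i.+1) %/ b%:Z)%Z = Xf x i.
Proof.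
rewrite /Xf; set F := Num.floor _; set q := (F %/ b%:Z)%Z; set r := (F %% b%:Z)%Z.
have bz : (b%:Z != 0) by apply/eqP; lia.
have eF : F = q * b%:Z + r by apply: divz_eq.
have r0 : 0 <= r by apply: modz_ge0.
have rb : r + 1 <= b%:Z by have := ltz_pmod F (_ : 0 < b%:Z); rewrite -/r; lia.
have eFr : (F%:~R : R) = q%:~R * B + r%:~R by rewrite eF rmorphD rmorphM /= intr_b.
have r0R : (0 : R) <= r%:~R by rewrite ler0z.
have rbR : (r%:~R : R) + 1 <= B by rewrite -intr_b -[1]/((1:int)%:~R) -rmorphD /= ler_int.
have := floor_itv (x * B ^+ i.+1); rewrite -/F rmorphD /= => /andP[h1 h2].
rewrite exprSr mulrA in h1 h2.
symmetry; apply: floor_def; apply/andP; split.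
  rewrite -(ler_pM2r B_gt0); lra.
rewrite rmorphD /= -(ltr_pM2r B_gt0); lra.
Qed.

Lemma Xf0 x : 0 <= x < 1 -> Xf x 0 = 0.
Proof. move=> /andP[h1 h2]; rewrite /Xf expr0 mulr1; apply: floor_def; rewrite /=; lra. Qed.

Lemma Xf_ge0 x i : 0 <= x -> 0 <= Xf x i.
Proof. by move=> h; rewrite /Xf floor_ge0 mulr_ge0 // exprn_ge0 // ltW. Qed.

Lemma Xf_lt x i : x < 1 -> Xf x i < (b ^ i)%N%:Z.
Proof.
move=> h; rewrite /Xf floor_lt_int -pmulrn natrX -/B.
by rewrite -[X in _ < X]mul1r ltr_pM2r // exprn_gt0.
Qed.

Lemma Xf_split x i : Xf x i.+1 = b%:Z * Xf x i + bdigit b x i.+1.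
Proof. by rewrite /bdigit -/(Xf x i.+1) {1}(divz_eq (Xf x i.+1) b%:Z) Xf_div mulrC. Qed.


Definition agree (x y : R) (i : nat) : bool := Xf x i == Xf y i.

Lemma digit_eq (x y : R) i :
  (bsub_digit b x y i == 0) = (bdigit b x i == bdigit b y i).
Proof.
rewrite /bsub_digit.
have -> : ((bdigit b x i - bdigit b y i) %% b%:Z == 0)%Z = (b%:Z %| bdigit b x i - bdigit b y i)%Z.
  by apply/eqP/dvdz_mod0P.
by rewrite -eqz_mod_dvd /bdigit !modz_mod.
Qed.

Lemma agreeS (x y : R) i : agree x y i.+1 = agree x y i && (bsub_digit b x y i.+1 == 0).
Proof.
rewrite digit_eq /agree; apply/eqP/andP.
  move=> e; split; first by rewrite -(Xf_div x i) -(Xf_div y i) e.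
  by rewrite /bdigit -/(Xf x i.+1) -/(Xf y i.+1) e.
by case=> /eqP e1 /eqP e2; rewrite !Xf_split e1 e2.
Qed.

Lemma agree_iff (x y : R) i : 0 <= x < 1 -> 0 <= y < 1 ->
  agree x y i <-> (forall j, (0 < j <= i)%N -> bsub_digit b x y j = 0).
Proof.
move=> hx hy; elim: i => [|i IH].
  split=> [_ j /andP[j0 j1]|_]; first lia.
  by rewrite /agree !Xf0.
rewrite agreeS; split.
  case/andP=> /IH h /eqP h2 j /andP[j0 ji].
  case: (ltngtP j i.+1) ji => // [ji|-> //] _; apply: h; lia.
move=> h; apply/andP; split; last first.
  apply/eqP; apply: h; lia.
by apply/IH => j hj; apply: h; lia.
Qed.

Lemma agree_le (x y : R) i j : (j <= i)%N -> agree x y i -> agree x y j.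
Proof.
elim: i => [|i IH] ji; first by rewrite leqn0 in ji; move/eqP: ji => ->.
case: (ltngtP j i.+1) ji => // [ji|-> //] _.
by rewrite agreeS => /andP[/IH h _]; apply: h.
Qed.

Let q : R := B^-1.
Lemma q_gt0 : 0 < q. Proof. by rewrite /q invr_gt0. Qed.
Lemma q_lt1 : q < 1. Proof. rewrite /q invf_lt1 // /B ltr1n; lia. Qed.

Lemma bnorm_ge0 (x y : R) : 0 <= bnorm_sub b x y.
Proof.
rewrite /bnorm_sub /bnorm_digits; case: excluded_middle_informative => // ex.
by rewrite invr_ge0 exprn_ge0 // ltW.
Qed.

Lemma bnorm_le (x y : R) k : 0 <= x < 1 -> 0 <= y < 1 ->
  agree x y k -> bnorm_sub b x y <= q ^+ k.+1.
Proof.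
move=> hx hy /(agree_iff x y k hx hy) ha.
rewrite /bnorm_sub /bnorm_digits; case: excluded_middle_informative => ex; last first.
  by rewrite exprn_ge0 // ltW // q_gt0.
case: ex_minnP => i /andP[i0 nz] _.
rewrite -exprVn -/q ler_wiXn2l ?ltW ?q_gt0 ?q_lt1 //.
rewrite ltnNge; apply/negP => ik.
by move: nz; rewrite ha ?eqxx // i0 ik.
Qed.

Lemma bnorm_ge (x y : R) k : 0 <= x < 1 -> 0 <= y < 1 ->
  ~~ agree x y k -> q ^+ k <= bnorm_sub b x y.
Proof.
move=> hx hy na.
have [j /andP[j0 jk] nz] : exists2 j, (0 < j <= k)%N & bsub_digit b x y j != 0.
  apply: NNPP => hn; move/negP: na; apply; apply/(agree_iff x y k hx hy) => j hj.
  by apply: NNPP => hnz; apply: hn; exists j => //; apply/eqP.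
rewrite /bnorm_sub /bnorm_digits.
case: (excluded_middle_informative (exists i, (0 < i)%N && (bsub_digit b x y i != 0))) => ex; last first.
  by exfalso; apply: ex; exists j; rewrite j0.
case: ex_minnP => i /andP[i0 _] imin.
have ij : (i <= j)%N by apply: imin; rewrite j0 nz.
rewrite -exprVn -/q ler_wiXn2l ?ltW ?q_gt0 ?q_lt1 //; lia.
Qed.

Lemma box_iff s dd aa (x : 'I_s -> R) :
  in_elem_box b dd aa x = [forall j, Xf (x j) (dd j) == (aa j)%:Z].
Proof.
rewrite /in_elem_box; apply: eq_forallb => j.
have hp : 0 < B ^+ dd j by rewrite exprn_gt0.
rewrite /Xf floor_eq rmorphD /= -pmulrn -natr1 -/B.
by rewrite ler_pdivrMr // ltr_pdivlMr.
Qed.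

Lemma Bexp n : B ^ (- (n%:Z)) = q ^+ n.
Proof. by rewrite -exprz_inv. Qed.

Lemma prod_le_q s (f : 'I_s -> R) (c : 'I_s -> nat) :
  (forall j, 0 <= f j <= q ^+ c j) -> \prod_j f j <= q ^+ (\sum_j c j).
Proof. by move=> h; rewrite -prodrXr; apply: ler_prod => j _; apply: h. Qed.

Lemma prod_ge_q s (f : 'I_s -> R) (c : 'I_s -> nat) :
  (forall j, q ^+ c j <= f j) -> q ^+ (\sum_j c j) <= \prod_j f j.
Proof.
move=> h; rewrite -prodrXr; apply: ler_prod => j _.
by rewrite h exprn_ge0 // ltW // q_gt0.
Qed.

Lemma sumS s (c : 'I_s -> nat) : (\sum_j (c j).+1 = \sum_j c j + s)%N.
Proof.
under eq_bigr do rewrite -addn1.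
by rewrite big_split /= sum_nat_const card_ord muln1.
Qed.

Lemma le_sum s (c : 'I_s -> nat) j : (c j <= \sum_j c j)%N.
Proof. by rewrite (bigD1 j) //= leq_addr. Qed.


Section Main.
Variables (s m : nat) (hs : (1 <= s)%N) (hm : (1 <= m)%N).
Variable P : 'I_(b ^ m) -> 'I_s -> R.
Hypothesis hP : forall n j, 0 <= P n j < 1.

Lemma uniq_box (adm : admissible b m s P s%:Z) dd aa :
  (\sum_j dd j)%N = m -> forall n1 n2,
  in_elem_box b dd aa (P n1) -> in_elem_box b dd aa (P n2) -> n1 = n2.
Proof.
move=> hsum.
suff H : forall n1 n2 : 'I_(b ^ m), (n1 < n2)%N ->
    in_elem_box b dd aa (P n1) -> in_elem_box b dd aa (P n2) -> False.
  move=> n1 n2 h1 h2; case: (ltngtP n1 n2) => [lt|lt|e].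
  - by exfalso; apply: (H _ _ lt).
  - by exfalso; apply: (H _ _ lt).
  - exact: val_inj.
move=> n1 n2 lt; rewrite !box_iff => /forallP h1 /forallP h2.
have := adm n1 n2 lt; rewrite -PoszD Bexp.
apply/negP; rewrite -leNgt /bnorm_sub_pt.
have -> : (m + s = \sum_j (dd j).+1)%N by rewrite sumS hsum.
apply: prod_le_q => j.
rewrite bnorm_ge0 /=; apply: bnorm_le => //.
by rewrite /agree (eqP (h1 j)) (eqP (h2 j)).
Qed.

Definition toI (N : nat) (h : (0 < N)%N) (k : nat) : 'I_N := Ordinal (ltn_pmod k h).

Lemma card_lt (N k : nat) : (k <= N)%N -> #|[pred i : 'I_N | (i < k)%N]| = k.
Proof.
move=> kN.
have inj : injective (widen_ord kN) by move=> x y e; apply: val_inj; exact: (congr1 val e).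
transitivity #|[seq widen_ord kN x | x in 'I_k]|; last by rewrite card_image // card_ord.
apply: eq_card => i; rewrite !inE; apply/idP/imageP.
  by move=> ik; exists (Ordinal ik) => //; apply: val_inj.
by case=> j _ ->; rewrite /= ltn_ord.
Qed.

Lemma net_of_adm : admissible b m s P s%:Z -> is_net0 b m s P.
Proof.
move=> adm dd aa hsum haa.
have hbm : (0 < b ^ m)%N by rewrite expn_gt0; lia.
have ddm : forall j, (dd j <= m)%N by move=> j; rewrite -hsum le_sum.
have bdd : forall j, (b ^ dd j <= b ^ m)%N by move=> j; rewrite leq_pexp2l //; lia.
pose g (n : 'I_(b ^ m)) : {ffun 'I_s -> 'I_(b ^ m)} :=
  [ffun j => @toI (b ^ m) hbm `|Xf (P n j) (dd j)|%N].
pose F (j : 'I_s) := [pred i : 'I_(b ^ m) | (i < b ^ dd j)%N].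
have Xlt : forall n j, (`|Xf (P n j) (dd j)| < b ^ dd j)%N.
  move=> n j; have /andP[h0 h1] := hP n j.
  have := Xf_lt (P n j) (dd j) h1; have := Xf_ge0 (P n j) (dd j) h0; lia.
have gv : forall n j, val (g n j) = `|Xf (P n j) (dd j)|%N.
  move=> n j; rewrite /g ffunE /= modn_small //.
  exact: leq_trans (Xlt n j) (bdd j).
have ginj : injective g.
  move=> n1 n2 e; apply: (uniq_box adm dd (fun j => `|Xf (P n1 j) (dd j)|%N) hsum).
    rewrite box_iff; apply/forallP => j; apply/eqP.
    by rewrite gez0_abs // Xf_ge0 //; case/andP: (hP n1 j).
  rewrite box_iff; apply/forallP => j; apply/eqP.
  rewrite -(gv n1 j) e gv.
  by rewrite gez0_abs // Xf_ge0 //; case/andP: (hP n2 j).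
have cardF : #|family F| = (b ^ m)%N.
  rewrite card_family foldrE big_image /=.
  under eq_bigr do rewrite card_lt ?bdd //.
  by rewrite -expn_sum hsum.
have sub : [seq g n | n in 'I_(b ^ m)] \subset family F.
  apply/subsetP => f /imageP [n _ ->]; apply/familyP => j.
  by rewrite inE gv Xlt.
have cimg : #|[seq g n | n in 'I_(b ^ m)]| = #|family F|.
  by rewrite card_image // cardF card_ord.
have eqF := subset_cardP cimg sub.
pose f0 : {ffun 'I_s -> 'I_(b ^ m)} := [ffun j => @toI (b ^ m) hbm (aa j)].
have : f0 \in family F.
  apply/familyP => j; rewrite inE /f0 ffunE /= modn_small ?haa //.
  exact: leq_trans (haa j) (bdd j).
rewrite -eqF => /imageP [n _ en].
have inb : in_elem_box b dd aa (P n).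
  rewrite box_iff; apply/forallP => j; apply/eqP.
  have := congr1 (fun f : {ffun 'I_s -> 'I_(b ^ m)} => val (f j)) en.
  rewrite /= gv /f0 ffunE /= modn_small; last exact: leq_trans (haa j) (bdd j).
  move=> ->; rewrite gez0_abs // Xf_ge0 //; by case/andP: (hP n j).
apply/eqP/cards1P; exists n; apply/setP => n'; rewrite !inE.
apply/idP/eqP => [h|->//]; exact: (uniq_box adm dd aa hsum _ _ h inb).
Qed.

Lemma adm_of_net : is_net0 b m s P -> admissible b m s P s%:Z.
Proof.
move=> net k n lt.
rewrite -PoszD Bexp.
pose A j := [pred i : 'I_m.+1 | agree (P n j) (P k j) i].
pose e j := (\max_(i in A j) i)%N.
have hA : forall j, (0 < #|A j|)%N.
  move=> j; apply/card_gt0P; exists ord0; rewrite inE /agree !Xf0 //.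
have eA : forall j, agree (P n j) (P k j) (e j).
  by move=> j; rewrite /e; have [i0 hi0 ->] := eq_bigmax_cond (fun i : 'I_m.+1 => nat_of_ord i) (hA j).
have em : forall j, (e j <= m)%N.
  by move=> j; rewrite /e; have [i0 hi0 ->] := eq_bigmax_cond (fun i : 'I_m.+1 => nat_of_ord i) (hA j); rewrite -ltnS.
case: (leqP m (\sum_j e j)) => hsum.
  exfalso.
  have [dd [hdd hs']] := sub_sum _ _ _ hsum.
  pose aa j := `|Xf (P n j) (dd j)|%N.
  have H := net dd aa hs'.
  have haa : forall j, (aa j < b ^ dd j)%N.
    move=> j; have /andP[h0 h1] := hP n j.
    have := Xf_lt (P n j) (dd j) h1; have := Xf_ge0 (P n j) (dd j) h0; rewrite /aa; lia.
  have := H haa; move/eqP/cards1P => [x hx].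
  have inn : n \in [set n0 | in_elem_box b dd aa (P n0)].
    rewrite inE box_iff; apply/forallP => j; apply/eqP.
    by rewrite /aa gez0_abs // Xf_ge0 //; case/andP: (hP n j).
  have ink : k \in [set n0 | in_elem_box b dd aa (P n0)].
    rewrite inE box_iff; apply/forallP => j; apply/eqP.
    have : agree (P n j) (P k j) (dd j) by apply: agree_le (eA j).
    rewrite /agree => /eqP <-.
    by rewrite /aa gez0_abs // Xf_ge0 //; case/andP: (hP n j).
  move: inn ink; rewrite hx !inE => /eqP e1 /eqP e2.
  by move: lt; rewrite e1 e2 ltnn.
have ej : forall j, ~~ agree (P n j) (P k j) (e j).+1.
  move=> j; apply/negP => ha.
  have ejm : (e j < m)%N by apply: leq_ltn_trans (le_sum _ e j) hsum.
  have : ((Ordinal (ejm : (e j).+1 < m.+1)%N : nat) <= e j)%N.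
    by rewrite /e; apply: leq_bigmax_cond; rewrite inE.
  by rewrite /= ltnn.
apply: (@lt_le_trans _ _ (q ^+ (\sum_j (e j).+1))).
  rewrite sumS ltr_iXn2l ?q_gt0 ?q_lt1 //; lia.
apply: prod_ge_q => j; apply: bnorm_ge => //; exact: ej.
Qed.

Lemma not_adm (d : int) : d < s%:Z -> ~ admissible b m s P d.
Proof.
move=> ds adm.
pose j0 : 'I_s := Ordinal hs.
have hbm : (0 < b ^ m.-1)%N by rewrite expn_gt0; lia.
pose f (n : 'I_(b ^ m)) : 'I_(b ^ m.-1) := @toI (b ^ m.-1) hbm `|Xf (P n j0) m.-1|%N.
have Xlt : forall n, (`|Xf (P n j0) m.-1| < b ^ m.-1)%N.
  move=> n; have /andP[h0 h1] := hP n j0.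
  have := Xf_lt (P n j0) m.-1 h1; have := Xf_ge0 (P n j0) m.-1 h0; lia.
have fv : forall n, val (f n) = `|Xf (P n j0) m.-1|%N.
  by move=> n; rewrite /f /= modn_small.
have [n1 [n2 [lt e]]] : exists n1 n2 : 'I_(b ^ m), (n1 < n2)%N /\ f n1 = f n2.
  apply: NNPP => hn.
  have finj : injective f.
    move=> x y exy; apply: val_inj; apply/eqP; apply: NNPP => /negP hxy; apply: hn.
    case: (ltngtP x y) hxy => // [xy|yx] _.
      by exists x, y.
    by exists y, x.
  have := leq_card f finj; rewrite !card_ord.
  have : (b ^ m = b * b ^ m.-1)%N by rewrite -expnS prednK.
  move=> ->; rewrite -[X in (_ <= X)%N]mul1n leq_pmul2r //; lia.
have ag : agree (P n2 j0) (P n1 j0) m.-1.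
  have := congr1 val e; rewrite !fv /agree => h.
  rewrite -(gez0_abs (Xf_ge0 _ _ _)); last by case/andP: (hP n2 j0).
  rewrite -h gez0_abs // Xf_ge0 //; by case/andP: (hP n1 j0).
have := adm n1 n2 lt; apply/negP; rewrite -leNgt.
pose c (j : 'I_s) := ((j == j0) * m.-1).+1%N.
apply: (@le_trans _ _ (q ^+ (\sum_j c j))).
  apply: prod_le_q => j; rewrite bnorm_ge0 /= /c.
  case: eqP => [->|_].
    by rewrite mul1n; apply: bnorm_le.
  by rewrite mul0n; apply: bnorm_le => //; rewrite /agree !Xf0.
rewrite sumS (bigD1 j0) //= mul1n big1 ?addn0; last first.
  by move=> j /negbTE ->.
rewrite -Bexp; apply: ler_weXz2l; first by rewrite /B ler1n; lia.
have -> : ((m.-1 + s)%N : int) = (m%:Z - 1 + s%:Z) by rewrite -subn1; lia.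
lia.
Qed.

End Main.
End Aux.
Theorem lemma2p1 (R : realType) (b s m : nat)
  (hb : (2 <= b)%N) (hs : (1 <= s)%N) (hm : (1 <= m)%N)
  (P : 'I_(b ^ m) -> 'I_s -> R)
  (hP : forall n j, 0 <= P n j < 1) :
  (admissible b m s P s%:Z <-> is_net0 b m s P) /\
  (forall d : int, d < s%:Z -> ~ admissible b m s P d).
Proof.
split; first split.
- exact: (@net_of_adm R b hb s m hs hm P hP).
- exact: (@adm_of_net R b hb s m hs hm P hP).
- exact: (@not_adm R b hb s m hs hm P hP).
Qed.
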